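(* Let $\Gamma\subsetneqq\mathbb{R}^n$ be an open convex cone with vertex at the origin such that $\{\lambda:\lambda_i>0\ \forall i\}\subset\Gamma\subset\{\lambda:\sum_i\lambda_i>0\}$, and let $f$ be a smooth symmetric function on $\Gamma$ with $\frac{\partial f}{\partial\lambda_i}>0$ in $\Gamma$ for all $i$, $f(a^*(1,\dots,1))=1$ for some $a^*>0$, and $\limsup_{\lambda\to\lambda_0}f(\lambda)<1$ for every $\lambda_0\in\partial\Gamma$. Let $A=\mathrm{diag}(a_1,\dots,a_n)\in\mathcal{A}$ with $0<a_1\leq\cdots\leq a_n$ and $\frac{\partial f}{\partial\lambda_1}(\lambda(A))=\max_i\frac{\partial f}{\partial\lambda_i}(\lambda(A))$. Let $g:[1,\infty)\to\mathbb{R}$ be the unique smooth function with $(g(w),a_2w,\dots,a_nw)\in\Gamma$ and $f(g(w),a_2w,\dots,a_nw)=1$ for $w\geq1$. Let $c_2>1$, let $\delta\geq0$ be such that $$\alpha_\delta=\frac{\sum_{i=1}^na_i\frac{\partial f}{\partial\lambda_i}(\lambda(A))}{(2a_n+\delta)\frac{\partial f}{\partial\lambda_1}(\lambda(A))}>1,$$ and let $w_{c_2,\delta}(s)$ be a solution on $[1,+\infty)$ of $$\frac{dw}{ds}=\frac{g(w)-a_1w}{(2a_n+\delta)s},\qquad w(1)=c_2.$$ Then $\lim_{s\to+\infty}w_{c_2,\delta}(s)=1$ and $w_{c_2,\delta}(s)-1=O(s^{-\alpha_\delta})$ as $s\to+\infty$.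
   Context: $S^+(n)$ is the set of real symmetric positive definite $n\times n$ matrices; for $A\in S^+(n)$, $a=\lambda(A)$ denotes its eigenvalues, $\hat a=\max_ia_i$, $\hat f_\lambda(a)=\max_i\frac{\partial f}{\partial\lambda_i}(a)$, and $\mathcal{A}:=\{A\in S^+(n): f(a)=1,\ \frac{\nabla f(a)\cdot a}{2\hat a\hat f_\lambda(a)}>1\}$. *)

(* Defs.v *)
From HB Require Import structures.
From mathcomp Require Import all_boot all_order all_algebra all_fingroup.
From mathcomp Require Import all_classical all_reals all_analysis.
Set Implicit Arguments. Unset Strict Implicit. Unset Printing Implicit Defensive.
Import Order.TTheory GRing.Theory Num.Theory.
Import numFieldNormedType.Exports.
Local Open Scope classical_set_scope.
Local Open Scope ring_scope.

Section Defs.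
Variable R : realType.

Definition ej (n : nat) (i : 'I_n) : 'rV[R]_n := delta_mx 0 i.

Definition partial (n : nat) (i : 'I_n) (f : 'rV[R]_n -> R) : 'rV[R]_n -> R :=
  fun x => 'D_(ej i) f x.

Fixpoint iter_partial (n : nat) (s : seq 'I_n) (f : 'rV[R]_n -> R) :
  'rV[R]_n -> R :=
  match s with
  | [::] => f
  | i :: s' => partial i (iter_partial s' f)
  end.

Definition smooth_on (n : nat) (D : set 'rV[R]_n) (f : 'rV[R]_n -> R) :=
  forall (s : seq 'I_n) (x : 'rV[R]_n), D x ->
    {for x, continuous (iter_partial s f)} /\
    (forall i : 'I_n, derivable (iter_partial s f) x (ej i)).

Definition open_convex_cone (n : nat) (G : set 'rV[R]_n) :=
  open G /\
  (forall x y, G x -> G y -> G (x + y)) /\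
  (forall (t : R) x, 0 < t -> G x -> G (t *: x)).

Definition symmetric_on (n : nat) (G : set 'rV[R]_n) (f : 'rV[R]_n -> R) :=
  forall (s : 'S_n) x, G x -> G (col_perm s x) /\ f (col_perm s x) = f x.

Definition limsup_lt1 (n : nat) (G : set 'rV[R]_n) (f : 'rV[R]_n -> R)
  (x0 : 'rV[R]_n) :=
  exists2 c : R, c < 1 &
    exists2 r : R, 0 < r & forall x, G x -> `|x - x0| < r -> f x <= c.

Definition bdry (n : nat) (G : set 'rV[R]_n) := closure G `\` interior G.

Definition vmax (n : nat) (a : 'rV[R]_n.+1) : R :=
  \big[Num.max/a ord0 ord0]_(i < n.+1) a ord0 i.

Definition fhat (n : nat) (f : 'rV[R]_n.+1 -> R) (a : 'rV[R]_n.+1) : R :=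
  \big[Num.max/partial ord0 f a]_(i < n.+1) partial i f a.

Definition grad_dot (n : nat) (f : 'rV[R]_n -> R) (a : 'rV[R]_n) : R :=
  \sum_(i < n) a ord0 i * partial i f a.

(* A = diag(a) (a matrix with positive eigenvalues a = lambda(A)) lies in
   the set \mathcal A *)
Definition in_Acal (n : nat) (f : 'rV[R]_n.+1 -> R) (a : 'rV[R]_n.+1) :=
  (forall i, 0 < a ord0 i) /\ f a = 1 /\
  grad_dot f a / (2 * vmax a * fhat f a) > 1.

Definition gvec (n : nat) (a : 'rV[R]_n.+1) (g : R -> R) (w : R) :
  'rV[R]_n.+1 :=
  \row_i (if i == ord0 then g w else a ord0 i * w).

End Defs.

(* Main.v *)
Require Import Defs.
From HB Require Import structures.
From mathcomp Require Import all_boot all_order all_algebra all_fingroup.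
From mathcomp Require Import all_classical all_reals all_analysis.
From mathcomp Require Import ring lra.
Import Order.TTheory GRing.Theory Num.Theory.
Import numFieldNormedType.Exports.
Local Open Scope classical_set_scope.
Local Open Scope ring_scope.
Set Implicit Arguments. Unset Strict Implicit. Unset Printing Implicit Defensive.
Section P1.
Variable R : realType.

Lemma dir_restrict m (F : 'rV[R]_m -> R) (p e : 'rV[R]_m) (t : R) :
  derivable F (p + t *: e) e ->
  is_derive t 1 (fun tau : R => F (p + tau *: e)) ('D_e F (p + t *: e)).
Proof.
move=> H.
have key : (fun h : R => h^-1 *: (((fun tau : R => F (p + tau *: e)) \o shift t) (h *: 1)
      - F (p + t *: e))) =
    (fun h : R => h^-1 *: ((F \o shift (p + t *: e)) (h *: e) - F (p + t *: e))).
  apply/funext => h /=.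
  by rewrite [h *: 1]/(GRing.scale _ _) /= mulr1 scalerDl addrCA addrA.
apply: DeriveDef.
  by rewrite /derivable key.
by rewrite /derive key.
Qed.

Lemma seg_mvt_aux m (F : 'rV[R]_m -> R) (p e : 'rV[R]_m) (lo hi : R) :
  lo <= hi ->
  (forall tau, lo <= tau <= hi -> derivable F (p + tau *: e) e) ->
  exists2 c, lo <= c <= hi &
    F (p + hi *: e) - F (p + lo *: e) = 'D_e F (p + c *: e) * (hi - lo).
Proof.
move=> lh H.
have := @MVT_segment R (fun tau : R => F (p + tau *: e))
   (fun tau => 'D_e F (p + tau *: e)) lo hi lh.
case.
- move=> x; rewrite in_itv /= => /andP[h1 h2].
  by apply: dir_restrict; apply: H; rewrite !ltW.
- apply: derivable_within_continuous => x; rewrite in_itv /= => hx.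
  by have [] := dir_restrict (H _ hx).
move=> c; rewrite in_itv /= => hc E; by exists c.
Qed.

Lemma seg_mvt m (F : 'rV[R]_m -> R) (p e : 'rV[R]_m) (d : R) :
  (forall th, 0 <= th <= 1 -> derivable F (p + (th * d) *: e) e) ->
  exists th, 0 <= th <= 1 /\ F (p + d *: e) - F p = d * 'D_e F (p + (th * d) *: e).
Proof.
move=> H.
case: (ltgtP d 0) => [dlt|dgt|->].
- have [c /andP[c1 c2] E] : exists2 c, d <= c <= 0 &
    F (p + 0 *: e) - F (p + d *: e) = 'D_e F (p + c *: e) * (0 - d).
    apply: seg_mvt_aux; first exact: ltW.
    move=> tau /andP[t1 t2].
    have -> : tau = (tau / d) * d by rewrite divfK // lt_eqF.
    apply: H; rewrite ler_ndivlMr // ler_ndivrMr // mul0r mul1r t1 t2 //.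
  exists (c / d); split.
    by rewrite ler_ndivlMr // ler_ndivrMr // mul0r mul1r c1 c2.
  rewrite divfK ?lt_eqF // scale0r addr0 in E *.
  by rewrite -opprB E; rewrite sub0r mulrN opprK mulrC.
- have [c /andP[c1 c2] E] : exists2 c, 0 <= c <= d &
    F (p + d *: e) - F (p + 0 *: e) = 'D_e F (p + c *: e) * (d - 0).
    apply: seg_mvt_aux; first exact: ltW.
    move=> tau /andP[t1 t2].
    have -> : tau = (tau / d) * d by rewrite divfK // gt_eqF.
    apply: H; rewrite ler_pdivlMr // ler_pdivrMr // mul0r mul1r t1 t2 //.
  exists (c / d); split.
    by rewrite ler_pdivlMr // ler_pdivrMr // mul0r mul1r c1 c2.
  rewrite divfK ?gt_eqF // scale0r addr0 in E *.
  by rewrite E subr0 mulrC.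
- exists 0; split; first by rewrite lexx ler01.
  by rewrite scale0r addr0 subrr mul0r.
Qed.

Definition pt m (x y : 'rV[R]_m) (k : nat) : 'rV[R]_m :=
  \row_j (if (j < k)%N then y ord0 j else x ord0 j).
Definition btw m (x y z : 'rV[R]_m) :=
  forall j, exists2 th, 0 <= th <= 1 & z ord0 j = x ord0 j + th * (y ord0 j - x ord0 j).

Lemma pt0 m (x y : 'rV[R]_m) : pt x y 0 = x.
Proof. by apply/rowP => j; rewrite mxE ltn0. Qed.

Lemma ptm m (x y : 'rV[R]_m) : pt x y m = y.
Proof. by apply/rowP => j; rewrite mxE ltn_ord. Qed.

Lemma ej_entry m (k j : 'I_m) : ej R k ord0 j = (j == k)%:R.
Proof. by rewrite /ej mxE eqxx. Qed.

Lemma ptS m (x y : 'rV[R]_m) (k : 'I_m) :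
  pt x y k.+1 = pt x y k + (y ord0 k - x ord0 k) *: ej R k.
Proof.
apply/rowP => j; rewrite !mxE eqxx /=.
have [->|neq] := eqVneq j k.
  by rewrite ltnSn ltnn mulr1 addrC subrK.
by rewrite ltnS leq_eqVlt val_eqE (negbTE neq) /= mulr0 addr0.
Qed.

Lemma btw_seg m (x y : 'rV[R]_m) (k : 'I_m) th : 0 <= th <= 1 ->
  btw x y (pt x y k + (th * (y ord0 k - x ord0 k)) *: ej R k).
Proof.
move=> th01 j; rewrite !mxE eqxx /=.
have [->|neq] := eqVneq j k.
  by exists th => //; rewrite ltnn mulr1.
rewrite mulr0 addr0; case: ifP => _.
  by exists 1; [rewrite ler01 lexx | rewrite mul1r addrC subrK].
by exists 0; [rewrite ler01 lexx | rewrite mul0r addr0].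
Qed.

Lemma tele m (F : 'rV[R]_m -> R) (x y : 'rV[R]_m) :
  (forall z, btw x y z -> forall k, derivable F z (ej R k)) ->
  exists xi : 'I_m -> 'rV[R]_m, (forall k, btw x y (xi k)) /\
    F y - F x = \sum_(k < m) (y ord0 k - x ord0 k) * partial k F (xi k).
Proof.
move=> H.
have step (k : 'I_m) : exists z, btw x y z /\
    F (pt x y k.+1) - F (pt x y k) = (y ord0 k - x ord0 k) * partial k F z.
  rewrite ptS.
  have [th [th01 E]] := @seg_mvt m F (pt x y k) (ej R k) (y ord0 k - x ord0 k)
     (fun th h => H _ (btw_seg _ _ _ h) k).
  by exists (pt x y k + (th * (y ord0 k - x ord0 k)) *: ej R k); split;
    [exact: btw_seg | exact: E].
have [xi Hxi] := choice step.
exists xi; split; first by move=> k; case: (Hxi k).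
have -> : F y - F x = F (pt x y m) - F (pt x y 0) by rewrite pt0 ptm.
rewrite -(telescope_sumr (fun k => F (pt x y k)) (leq0n m)) big_mkord.
by apply: eq_bigr => k _; case: (Hxi k).
Qed.

End P1.

Section Gen.
Variable R : realType.

Lemma box_ball m (a x : 'rV[R]_m) (r : R) : 0 < r ->
  (forall j, `|a ord0 j - x ord0 j| < r) -> ball a r x.
Proof.
move=> r0 H; rewrite -ball_normE /ball_ /=.
rewrite [X in X < _]mx_normrE.
apply: bigmax_lt => // -[i j] _ /=.
by rewrite (ord1 i) !mxE; apply: H.
Qed.

Lemma le_sum_term m (F : 'I_m -> R) i : (forall k, 0 <= F k) -> F i <= \sum_k F k.
Proof. by move=> H; rewrite (bigD1 i) //= lerDl sumr_ge0. Qed.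

Lemma btw_le m (a y z : 'rV[R]_m) : btw a y z ->
  forall j, `|z ord0 j - a ord0 j| <= `|y ord0 j - a ord0 j|.
Proof.
move=> B j; have [th /andP[t0 t1] ->] := B j.
by rewrite addrAC subrr add0r normrM (ger0_norm t0) ler_piMl.
Qed.

Lemma btw_trans m (a y z w : 'rV[R]_m) : btw a y z -> btw a z w -> btw a y w.
Proof.
move=> B1 B2 j; have [th /andP[t0 t1] E1] := B1 j; have [th' /andP[t0' t1'] E2] := B2 j.
exists (th' * th).
  by rewrite mulr_ge0 //= mulr_ile1.
by rewrite E2 E1; ring.
Qed.

Lemma btw_refl m (a y : 'rV[R]_m) : btw a y y.
Proof. by move=> j; exists 1; [rewrite ler01 lexx | rewrite mul1r addrC subrK]. Qed.

End Gen.

Section P2.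
Variables (R : realType) (n : nat) (Gamma : set 'rV[R]_n.+1)
  (f : 'rV[R]_n.+1 -> R) (a : 'rV[R]_n.+1) (g : R -> R).
Hypothesis HG : open_convex_cone Gamma.
Hypothesis Hpos : [set x : 'rV[R]_n.+1 | forall i, 0 < x ord0 i] `<=` Gamma.
Hypothesis Hsm : smooth_on Gamma f.
Hypothesis Hpart : forall x i, Gamma x -> 0 < partial i f x.
Hypothesis Ha : forall i, 0 < a ord0 i.
Hypothesis Hfa : f a = 1.
Hypothesis Hg : forall x, 1 <= x -> Gamma (gvec a g x) /\ f (gvec a g x) = 1.

Lemma cone_seg p q th : Gamma p -> Gamma q -> 0 <= th <= 1 ->
  Gamma ((1 - th) *: p + th *: q).
Proof.
case: HG => _ [Hadd Hsc] Gp Gq /andP[t0 t1].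
have [->|th0] := eqVneq th 0; first by rewrite subr0 scale1r scale0r addr0.
have [->|th1] := eqVneq th 1; first by rewrite subrr scale0r add0r scale1r.
apply: Hadd; apply: Hsc => //.
  by rewrite subr_gt0 lt_neqAle th1.
by rewrite lt_neqAle eq_sym th0.
Qed.

Lemma seg0_Gamma p q z : Gamma p -> Gamma q ->
  (forall j, j != ord0 -> p ord0 j = q ord0 j) -> btw p q z -> Gamma z.
Proof.
move=> Gp Gq E B; have [th th01 Ez0] := B ord0.
suff -> : z = (1 - th) *: p + th *: q by apply: cone_seg.
apply/rowP => j; rewrite !mxE.
have [->|jn] := eqVneq j ord0.
  by rewrite Ez0; ring.
have [th' _ ->] := B j.
by rewrite (E j jn) subrr mulr0 addr0; ring.
Qed.

Lemma derivable_G z k : Gamma z -> derivable f z (ej R k).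
Proof. by move=> Gz; exact: ((Hsm [::] Gz).2 k). Qed.

Lemma cmp0 p q : Gamma p -> Gamma q ->
  (forall j, j != ord0 -> p ord0 j = q ord0 j) ->
  exists2 c, 0 < c & f q - f p = (q ord0 ord0 - p ord0 ord0) * c.
Proof.
move=> Gp Gq E.
have [xi [Bxi Exi]] := @tele R _ f p q
  (fun z Bz k => @derivable_G z k (seg0_Gamma Gp Gq E Bz)).
exists (partial ord0 f (xi ord0)).
  by apply: Hpart; apply: (seg0_Gamma Gp Gq E (Bxi ord0)).
rewrite Exi big_ord_recl /= big1 ?addr0 // => i _.
by rewrite E ?subrr ?mul0r // eq_sym neq_lift.
Qed.

Lemma NEG x : 1 < x -> g x < a ord0 ord0 * x.
Proof.
move=> x1.
have Gxa : forall z, btw a (x *: a) z -> Gamma z.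
  move=> z B; apply: Hpos => j; have [th /andP[t0 t1] ->] := B j.
  rewrite mxE; have aj := Ha j.
  have : 0 <= th * (x * a ord0 j - a ord0 j).
    by apply: mulr_ge0 => //; rewrite subr_ge0 ler_peMl // ltW.
  by move=> h; apply: (lt_le_trans aj); rewrite lerDl.
have [xi [Bxi Exi]] := @tele R _ f a (x *: a)
  (fun z Bz k => @derivable_G z k (Gxa z Bz)).
have Hwa : f a < f (x *: a).
  rewrite -subr_gt0 Exi big_ord_recl.
  have h1 : 0 < ((x *: a) ord0 ord0 - a ord0 ord0) * partial ord0 f (xi ord0).
    apply: mulr_gt0; last by apply: Hpart; apply: Gxa.
    by rewrite mxE subr_gt0 -{1}[a ord0 ord0]mul1r ltr_pM2r.
  have h2 : 0 <= \sum_(i < n) ((x *: a) ord0 (lift ord0 i) - a ord0 (lift ord0 i)) *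
       partial (lift ord0 i) f (xi (lift ord0 i)).
    apply: sumr_ge0 => i _; apply: mulr_ge0; last by apply/ltW/Hpart/Gxa.
    by rewrite mxE subr_ge0 ler_peMl // ltW.
  lra.
have Gwa : Gamma (x *: a) by apply: Hpos => j; rewrite mxE mulr_gt0 // (lt_trans ltr01 x1).
have [c c0 Ec] : exists2 c, 0 < c & f (x *: a) - f (gvec a g x) =
    ((x *: a) ord0 ord0 - (gvec a g x) ord0 ord0) * c.
  apply: cmp0 => //; first exact: (Hg (ltW x1)).1.
  by move=> j jn; rewrite !mxE (negbTE jn) mulrC.
have := (Hg (ltW x1)).2; rewrite /gvec !mxE /= in Ec * => Hgx.
rewrite Hgx -Hfa in Ec.
have : 0 < (x * a ord0 ord0 - g x) * c by rewrite -Ec subr_gt0.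
by rewrite pmulr_lgt0 // subr_gt0 mulrC.
Qed.


Lemma partial2_bound : exists2 r : R, 0 < r & exists M : R, forall x : 'rV[R]_n.+1,
  (forall j, `|a ord0 j - x ord0 j| < r) ->
  Gamma x /\ forall i k, `|partial k (partial i f) x| <= M.
Proof.
have Ga : Gamma a by apply: Hpos.
have N1 : \forall x \near a, Gamma x.
  by apply: open_nbhs_nbhs; split => //; case: HG.
have N2i : forall i k, \forall x \near a,
    `|partial k (partial i f) a - partial k (partial i f) x| < 1.
  move=> i k; have := (Hsm [:: k; i] Ga).1.
  by move/cvgrPdist_lt => /(_ 1 ltr01).
have N2 : \forall x \near a, forall i k,
    `|partial k (partial i f) a - partial k (partial i f) x| < 1.
  exact: (@filter_forall _ _ _ (nbhs a) _ (fun i =>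
    @filter_forall _ _ _ (nbhs a) _ (N2i i))).
have N3 : nbhs a (fun x => Gamma x /\ forall i k,
    `|partial k (partial i f) a - partial k (partial i f) x| < 1).
  by apply: filterI.
have [r r0 Hr] := (nbhs_ballP a _).1 N3.
exists r => //.
exists (\sum_i \sum_k (`|partial k (partial i f) a| + 1)).
move=> x Hx; have [Gx Hb] := Hr x (box_ball r0 Hx); split => // i k.
have h := Hb i k.
set D := partial k (partial i f) in h *.
have e : D x = D a - (D a - D x) by rewrite opprB addrCA subrr addr0.
rewrite e; apply: (le_trans (ler_normB _ _)).
apply: (le_trans (y := `|D a| + 1)); first by rewrite lerD2l ltW.
apply: (le_trans (y := \sum_k0 (`|partial k0 (partial i f) a| + 1))).
  by apply: (le_sum_term (F := fun k0 => `|partial k0 (partial i f) a| + 1)) => k0;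
    rewrite addr_ge0.
apply: (le_sum_term (F := fun i0 => \sum_k0 (`|partial k0 (partial i0 f) a| + 1))).
by move=> i0; apply: sumr_ge0 => k0 _; rewrite addr_ge0.
Qed.


Lemma KEY : exists2 u0 : R, 0 < u0 & exists C : R, forall x, 1 <= x <= 1 + u0 ->
  g x <= a ord0 ord0 - (\sum_(i < n) a ord0 (lift ord0 i) * partial (lift ord0 i) f a)
     / partial ord0 f a * (x - 1) + C * (x - 1) ^+ 2.
Proof.
have Ga : Gamma a by apply: Hpos.
have [r r0 [M HM]] := partial2_bound.
have M0 : 0 <= M.
  have Ha0 : forall j, `|a ord0 j - a ord0 j| < r by move=> j; rewrite subrr normr0.
  have := (HM a Ha0).2 ord0 ord0.
  exact: le_trans (normr_ge0 _).
set f1 := partial ord0 f a.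
have f1p : 0 < f1 by apply: Hpart.
set S := \sum_(i < n) _.
have S0 : 0 <= S.
  by apply: sumr_ge0 => i _; apply: mulr_ge0; [apply: ltW | apply/ltW/Hpart].
set SA := \sum_j a ord0 j.
have SA0 : 0 <= SA by apply: sumr_ge0 => j _; apply/ltW.
have Sf0 : 0 <= S / f1 by apply: divr_ge0 => //; apply: ltW.
set D := S / f1 + 1 + SA.
have D1 : 1 <= D by rewrite /D; lra.
have D0 : 0 < D by lra.
have N0 : 0 < (n.+1)%:R :> R by rewrite ltr0n.
set C := M * ((n.+1)%:R * D) ^+ 2 / f1 + 1.
have C1 : 1 <= C.
  by rewrite /C lerDr; apply: divr_ge0; [apply: mulr_ge0 => //; apply: sqr_ge0 | apply: ltW].
have C0 : 0 < C by lra.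
have hC : C * f1 = M * ((n.+1)%:R * D) ^+ 2 + f1.
  by rewrite /C mulrDl divfK ?mul1r // gt_eqF.
exists (Num.min C^-1 (r / (2 * D))).
  by rewrite lt_min invr_gt0 C0 /= divr_gt0 // mulr_gt0.
exists C => x /andP[x1 x2].
set u := x - 1.
have u0 : 0 <= u by rewrite subr_ge0.
have [uC uD] : u <= C^-1 /\ u <= r / (2 * D).
  by move: x2; rewrite -lerBlDl le_min => /andP[].
have Cu : C * u <= 1.
  by move: uC; rewrite -(ler_pM2l C0) mulfV // gt_eqF.
have Du : D * u < r.
  have h : D * u <= D * (r / (2 * D)) by rewrite ler_pM2l.
  have e : D * (r / (2 * D)) = r / 2 by field; rewrite gt_eqF.
  rewrite e in h; lra.
set t := a ord0 ord0 - S / f1 * u + C * u ^+ 2.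
set y : 'rV[R]_n.+1 := \row_j (if j == ord0 then t else a ord0 j * x).
have y0 : y ord0 ord0 = t by rewrite mxE eqxx.
have yj : forall i : 'I_n, y ord0 (lift ord0 i) = a ord0 (lift ord0 i) * x.
  by move=> i; rewrite mxE eq_sym (negbTE (neq_lift _ _)).
have dj : forall j, `|y ord0 j - a ord0 j| <= D * u.
  move=> j; rewrite mxE; case: eqP => [->|_].
    rewrite /t.
    have hu2 : C * u ^+ 2 <= u by rewrite expr2 mulrA ler_piMl.
    have hu2' : 0 <= C * u ^+ 2 by apply: mulr_ge0; [apply: ltW | apply: sqr_ge0].
    have hsu : 0 <= S / f1 * u by apply: mulr_ge0.
    have hsa : 0 <= SA * u by apply: mulr_ge0.
    have eD : D * u = S / f1 * u + u + SA * u by rewrite /D; ring.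
    rewrite ler_norml eD; apply/andP; split; lra.
  have -> : a ord0 j * x - a ord0 j = a ord0 j * u by rewrite /u; ring.
  rewrite normrM (ger0_norm u0) (gtr0_norm (Ha j)); apply: ler_wpM2r => //.
  apply: (le_trans (y := SA)); last by rewrite /D; lra.
  by apply: (le_sum_term (F := fun j => a ord0 j)) => k; apply/ltW.
have boxy : forall z, btw a y z -> forall j, `|a ord0 j - z ord0 j| < r.
  move=> z B j; rewrite distrC; apply: (le_lt_trans (btw_le B j)).
  exact: (le_lt_trans (dj j) Du).
have Gz : forall z, btw a y z -> Gamma z /\ forall i k, `|partial k (partial i f) z| <= M.
  by move=> z B; apply: HM; apply: boxy.
have [xi [Bxi Exi]] := @tele R _ f a y
  (fun z Bz k => @derivable_G z k (Gz z Bz).1).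
have sumd : \sum_j `|y ord0 j - a ord0 j| <= (n.+1)%:R * (D * u).
  apply: (le_trans (ler_sum _ (fun j _ => dj j))).
  by rewrite sumr_const card_ord mulr_natl.
have Lip : forall i z, btw a y z ->
    `|partial i f z - partial i f a| <= M * ((n.+1)%:R * (D * u)).
  move=> i z Bz.
  have [eta [Beta Eeta]] := @tele R _ (partial i f) a z
    (fun w Bw k => (Hsm [:: i] (Gz w (btw_trans Bz Bw)).1).2 k).
  rewrite Eeta; apply: (le_trans (ler_norm_sum _ _ _)).
  apply: (le_trans (y := M * \sum_j `|y ord0 j - a ord0 j|)); last by apply: ler_wpM2l.
  rewrite mulr_sumr; apply: ler_sum => k _; rewrite normrM mulrC.
  apply: ler_pM => //.
    exact: ((Gz _ (btw_trans Bz (Beta k))).2 i k).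
  exact: btw_le Bz k.
have E1 : \sum_k (y ord0 k - a ord0 k) * partial k f a = C * f1 * u ^+ 2.
  rewrite big_ord_recl y0.
  under eq_bigr => i _ do rewrite yj.
  have -> : \sum_(i < n) (a ord0 (lift ord0 i) * x - a ord0 (lift ord0 i)) *
      partial (lift ord0 i) f a = u * S.
    by rewrite /S mulr_sumr; apply: eq_bigr => i _; rewrite /u; ring.
  rewrite /t -/f1; field; by rewrite gt_eqF.
have E2 : `|\sum_k (y ord0 k - a ord0 k) * (partial k f (xi k) - partial k f a)|
    <= M * ((n.+1)%:R * D) ^+ 2 * u ^+ 2.
  apply: (le_trans (ler_norm_sum _ _ _)).
  apply: (le_trans (y := \sum_(k < n.+1) (D * u) * (M * ((n.+1)%:R * (D * u))))).
    apply: ler_sum => k _; rewrite normrM; apply: ler_pM => //.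
    exact: (Lip k _ (Bxi k)).
  rewrite sumr_const card_ord -mulr_natl.
  by rewrite le_eqVlt; apply/orP; left; apply/eqP; ring.
have Hfy : f a <= f y.
  have hsplit : f y - f a = C * f1 * u ^+ 2 +
      \sum_k (y ord0 k - a ord0 k) * (partial k f (xi k) - partial k f a).
    by rewrite Exi -E1 -big_split /=; apply: eq_bigr => k _; ring.
  move: E2; rewrite ler_norml => /andP[E2l _].
  have key : C * f1 * u ^+ 2 - M * ((n.+1)%:R * D) ^+ 2 * u ^+ 2 = f1 * u ^+ 2.
    by rewrite -mulrBl hC addrAC subrr add0r.
  have : 0 <= f1 * u ^+ 2 by apply: mulr_ge0; [apply: ltW | apply: sqr_ge0].
  lra.
have Gy : Gamma y := (Gz y (btw_refl a y)).1.
have [c c0 Ec] : exists2 c, 0 < c &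
    f (gvec a g x) - f y = ((gvec a g x) ord0 ord0 - y ord0 ord0) * c.
  apply: cmp0 => //; first exact: (Hg x1).1.
  by move=> j jn; rewrite !mxE (negbTE jn).
rewrite (Hg x1).2 y0 {1}/gvec mxE /= in Ec.
have : (g x - t) * c <= 0 by rewrite -Ec subr_le0 -Hfa.
by rewrite pmulr_lle0 // subr_le0.
Qed.

End P2.

Section ODEgen.
Variable R : realType.

Lemma nincr_of_derive (F dF : R -> R) (s0 : R) :
  (forall s, s0 <= s -> is_derive s 1 F (dF s)) ->
  (forall s, s0 < s -> dF s <= 0) ->
  forall x y, s0 <= x -> x <= y -> F y <= F x.
Proof.
move=> HD Hle; apply: ler0_derive1_nincry.
- by move=> x; rewrite in_itv /= andbT => hx; have [] := HD x (ltW hx).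
- move=> x; rewrite in_itv /= andbT => hx; rewrite derive1E.
  by have [_ ->] := HD x (ltW hx); apply: Hle.
- apply: derivable_within_continuous => x; rewrite in_itv /= andbT => hx.
  by have [] := HD x hx.
Qed.

Lemma is_derive_powR (b s : R) : 0 < s ->
  is_derive s 1 (@powR R ^~ b) (b * s `^ (b - 1)).
Proof.
move=> s0; apply: DeriveDef.
  by apply: derivable_powR; rewrite in_itv /= andbT.
by rewrite -derive1E powR_derive1 // in_itv /= andbT.
Qed.

Lemma test_fun (w : R -> R) (m t : R) : (w + m *: (@ln R)) t = w t + m * ln t.
Proof. by []. Qed.

End ODEgen.

Section ODE.
Variables (R : realType) (g w : R -> R) (a1 K alpha : R).
Hypothesis K0 : 0 < K.
Hypothesis alpha0 : 0 < alpha.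
Hypothesis a10 : 0 <= a1.
Hypothesis NEG : forall x, 1 < x -> g x < a1 * x.
Hypothesis KEY : exists2 u0 : R, 0 < u0 & exists C : R, forall x, 1 <= x <= 1 + u0 ->
  g x - a1 * x <= - (alpha * K) * (x - 1) + C * (x - 1) ^+ 2.
Hypothesis gc : {within `[1, +oo[, continuous g}.
Hypothesis w1 : forall s, 1 <= s -> 1 <= w s.
Hypothesis wd : forall s, 1 < s -> derivable w s 1 /\
  derive1 w s = (g (w s) - a1 * w s) / (K * s).

Lemma w_isd (s : R) : 1 < s -> is_derive s 1 w (derive1 w s).
Proof. by move=> s1; rewrite derive1E; apply: derivableP; case: (wd s1). Qed.

Lemma g1 : g 1 - a1 * 1 <= 0.
Proof.
case: KEY => u0 u00 [C HC].
have := HC 1; rewrite lexx /= lerDl ltW // subrr expr0n /= mulr0 mulr0 addr0.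
by apply.
Qed.

Lemma wd_le0 (s : R) : 1 < s -> derive1 w s <= 0.
Proof.
move=> s1; rewrite (wd s1).2 pmulr_lle0; last first.
  by rewrite invr_gt0 mulr_gt0 // (lt_trans ltr01 s1).
have := w1 (ltW s1); rewrite le_eqVlt => /orP[/eqP <-|ws1].
  exact: g1.
by rewrite subr_le0 ltW // NEG.
Qed.

Lemma wmono (s t : R) : 1 < s -> s <= t -> w t <= w s.
Proof.
move=> s1 st.
apply: (@nincr_of_derive R w (derive1 w) s) => //.
  by move=> x hx; apply: w_isd; apply: (lt_le_trans s1 hx).
by move=> x hx; apply: wd_le0; apply: (lt_trans s1 hx).
Qed.


Let E := w @` [set s : R | 1 < s].

Lemma E_inf : has_inf E.
Proof.
split; first by exists (w 2), 2 => //=; rewrite ltr1n.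
by exists 1 => y [s /= s1 <-]; apply: w1; apply: ltW.
Qed.

Lemma ell_ge1 : 1 <= inf E.
Proof.
apply: lb_le_inf; first by case: E_inf.
by move=> y [s /= s1 <-]; apply: w1; apply: ltW.
Qed.

Lemma ell_le s : 1 < s -> inf E <= w s.
Proof. by move=> s1; apply: ge_inf; [case: E_inf | exists s]. Qed.

Lemma ell_eq1 : inf E = 1.
Proof.
apply/eqP; rewrite eq_le ell_ge1 andbT; apply/negPn/negP; rewrite -ltNge => l1.
set l := inf E in l1.
have hn := NEG l1.
set m0 := a1 * l - g l.
have m00 : 0 < m0 by rewrite subr_gt0.
have cg : g x @[x --> l] --> g l.
  have [+ _] := (continuous_within_itvcyP 1 g).1 gc.
  by apply; rewrite in_itv /= andbT.
have N1 : \forall t \near l, `|g l - g t| < m0 / 2.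
  by move: cg => /cvgrPdist_lt; apply; apply: divr_gt0 m00 (ltr0Sn _ 1).
have [eta eta0 Heta] := (nbhs_ballP _ _).1 N1.
have [e [s1 /= s11 <-] Hs1] := inf_adherent eta0 E_inf.
set m := m0 / 2 / K.
have m_pos : 0 < m by rewrite divr_gt0 // divr_gt0 // ltr0Sn.
have hb : forall t, s1 <= t -> derive1 w t <= - m / t.
  move=> t st; have t1 : 1 < t := lt_le_trans s11 st.
  have t0 : 0 < t := lt_trans ltr01 t1.
  have hwt1 : l <= w t by apply: ell_le.
  have hwt2 : w t <= w s1 by apply: wmono.
  have hball : ball l eta (w t).
    rewrite -ball_normE /ball_ /= distrC ger0_norm ?subr_ge0 // ltrBlDl.
    exact: (le_lt_trans hwt2 Hs1).
  have hg := Heta _ hball; rewrite /= in hg.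
  have hg' : g (w t) < g l + m0 / 2.
    by move: hg; rewrite ltr_norml => /andP[h _]; lra.
  have ha : a1 * l <= a1 * w t by apply: ler_wpM2l.
  rewrite (wd t1).2 /m.
  have -> : - (m0 / 2 / K) / t = (- (m0 / 2)) / (K * t) by field; rewrite !gt_eqF.
  rewrite ler_pM2r ?invr_gt0 ?mulr_gt0 //.
  rewrite /m0 in hg' *; lra.
pose F := w + m *: (@ln R).
have HF : forall t, s1 <= t -> is_derive t 1 F (derive1 w t + m *: t^-1).
  move=> t st; have t1 : 1 < t := lt_le_trans s11 st.
  apply: is_deriveD; first exact: w_isd.
  apply: is_deriveZ; apply: is_derive1_ln; exact: lt_trans ltr01 t1.
have HF0 : forall t, s1 < t -> derive1 w t + m *: t^-1 <= 0.
  move=> t st; have t0 : 0 < t by apply: lt_trans ltr01 (lt_trans s11 st).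
  have := hb t (ltW st).
  have -> : m *: t^-1 = m / t by [].
  rewrite mulNr; lra.
set T := expR (w s1 / m + ln s1).
have s10 : 0 < s1 := lt_trans ltr01 s11.
have ws1 : 0 < w s1 by apply: (lt_le_trans ltr01); apply: w1; apply: ltW.
have sT : s1 <= T.
  rewrite /T -{1}(lnK s10) ler_expR lerDr; apply: ltW; exact: divr_gt0.
have := @nincr_of_derive R F _ s1 HF HF0 s1 T (lexx _) sT.
rewrite /F (test_fun w m T) (test_fun w m s1) /T expRK.
have -> : m * (w s1 / m + ln s1) = w s1 + m * ln s1 by field; rewrite gt_eqF.
have : 1 <= w T by apply: w1; apply: (le_trans (ltW s11) sT).
rewrite /T; lra.
Qed.

Lemma wlim : w s @[s --> +oo] --> (1 : R).
Proof.
apply/cvgrPdist_lt => eps eps0.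
have [e [s1 /= s11 <-] Hs1] := inf_adherent eps0 E_inf.
rewrite ell_eq1 in Hs1.
exists s1; split; first exact: num_real.
move=> t st; have t1 : 1 < t := lt_trans s11 st.
have h1 := w1 (ltW t1).
have h2 := wmono s11 (ltW st).
rewrite distrC ger0_norm ?subr_ge0 //; lra.
Qed.


Lemma wrate : exists C0 : R, \forall s \near +oo, `|w s - 1| <= C0 * s `^ (- alpha).
Proof.
case: KEY => u0 u00 [C HC].
set C' := Num.max C 1.
have C'1 : 1 <= C' by rewrite le_max lexx orbT.
have C'0 : 0 < C' by lra.
have HC' : forall x, 1 <= x <= 1 + u0 ->
    g x - a1 * x <= - (alpha * K) * (x - 1) + C' * (x - 1) ^+ 2.
  move=> x hx; apply: (le_trans (HC x hx)); rewrite lerD2l.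
  by apply: ler_wpM2r; [exact: sqr_ge0 | rewrite le_max lexx].
set u1 := Num.min u0 (alpha * K / (4 * C')).
have u10 : 0 < u1.
  by rewrite lt_min u00 /= divr_gt0 // ?mulr_gt0 // ltr0n.
have u1a : u1 <= u0 by rewrite ge_min lexx.
have u1b : u1 <= alpha * K / (4 * C') by rewrite ge_min lexx orbT.
have hcu1 : C' * u1 <= alpha * K / 4.
  have : C' * u1 <= C' * (alpha * K / (4 * C')) by rewrite ler_pM2l.
  have -> : C' * (alpha * K / (4 * C')) = alpha * K / 4 by field; rewrite gt_eqF.
  by [].
move: wlim => /cvgrPdist_lt /(_ u1 u10) [M [Mr HM]].
set s0 := Num.max M 1 + 1.
have mM : M <= Num.max M 1 by rewrite le_max lexx.
have m1 : 1 <= Num.max M 1 by rewrite le_max lexx orbT.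
have s0M : M < s0 by rewrite /s0; lra.
have s01 : 1 < s0 by rewrite /s0; lra.
have s0pos : 0 < s0 by lra.
have ut : forall t, s0 <= t -> 1 < t /\ 0 <= w t - 1 <= u1.
  move=> t ht; have t1 : 1 < t := lt_le_trans s01 ht.
  have := HM t (lt_le_trans s0M ht).
  have h := w1 (ltW t1).
  rewrite distrC ger0_norm ?subr_ge0 // => h'.
  by split => //; apply/andP; split; lra.
have dwb : forall t, s0 <= t -> derive1 w t <=
    (- (alpha * K) * (w t - 1) + C' * (w t - 1) ^+ 2) / (K * t).
  move=> t ht; have [t1 /andP[h0 h1]] := ut t ht.
  rewrite (wd t1).2 ler_pM2r ?invr_gt0 ?mulr_gt0 //; last exact: lt_trans ltr01 t1.
  by apply: HC'; apply/andP; split; lra.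
set b := alpha / 2.
have b0 : 0 < b by rewrite divr_gt0.
set P0 := s0 `^ b.
have P00 : 0 < P0 by apply: powR_gt0.
have powB : forall t, 0 < t -> t `^ (b - 1) = t `^ b / t.
  by move=> t t0; rewrite powRB ?(gt_eqF t0) ?implybT // powRr1 // ltW.
pose W := (@powR R ^~ b) * (w - cst 1).
have HW : forall t, s0 <= t -> is_derive t 1 W
    (t `^ b * derive1 w t + (w t - 1) * (b * (t `^ b / t))).
  move=> t ht; have [t1 _] := ut t ht; have t0 : 0 < t := lt_trans ltr01 t1.
  apply: is_derive_eq.
    apply: is_deriveM; first exact: is_derive_powR.
    by apply: is_deriveB; try exact: w_isd; try exact: is_derive_cst.
  by rewrite subr0 powB.
have HW0 : forall t, s0 < t ->
    t `^ b * derive1 w t + (w t - 1) * (b * (t `^ b / t)) <= 0.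
  move=> t ht; have [t1 /andP[h0 h1]] := ut t (ltW ht).
  have t0 : 0 < t := lt_trans ltr01 t1.
  set P := t `^ b; set u := w t - 1.
  have P0' : 0 <= P by apply: powR_ge0.
  have h := ler_wpM2l P0' (dwb t (ltW ht)).
  rewrite -/u in h.
  apply: (le_trans (y := P * ((- (alpha * K) * u + C' * u ^+ 2) / (K * t)) +
     u * (b * (P / t)))); first by rewrite lerD2r.
  have -> : P * ((- (alpha * K) * u + C' * u ^+ 2) / (K * t)) + u * (b * (P / t))
      = (P / t) * (u * ((C' * u - b * K) / K)).
    by rewrite /b; field; rewrite ?gt_eqF.
  apply: mulr_ge0_le0; first by apply: divr_ge0 => //; apply: ltW.
  apply: mulr_ge0_le0 => //.
  rewrite pmulr_lle0 ?invr_gt0 //.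
  have : C' * u <= C' * u1 by rewrite ler_pM2l.
  move=> hh; have aK := mulr_gt0 alpha0 K0; rewrite /b; lra.
have hW1 : forall t, s0 <= t -> t `^ b * (w t - 1) <= P0 * (w s0 - 1).
  move=> t ht.
  exact: (@nincr_of_derive R W _ s0 HW HW0 s0 t (lexx _) ht).
pose V := W * ((@powR R ^~ b) + cst P0).
have HV : forall t, s0 <= t -> is_derive t 1 V
    ((t `^ b * (w t - 1)) * (b * (t `^ b / t)) +
     (t `^ b + P0) * (t `^ b * derive1 w t + (w t - 1) * (b * (t `^ b / t)))).
  move=> t ht; have [t1 _] := ut t ht; have t0 : 0 < t := lt_trans ltr01 t1.
  apply: is_derive_eq.
    apply: is_deriveM; first exact: HW.
    by apply: is_deriveD; try exact: is_derive_powR; try exact: is_derive_cst.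
  by rewrite addr0 powB.
have HV0 : forall t, s0 < t ->
    (t `^ b * (w t - 1)) * (b * (t `^ b / t)) +
     (t `^ b + P0) * (t `^ b * derive1 w t + (w t - 1) * (b * (t `^ b / t))) <= 0.
  move=> t ht; have [t1 /andP[h0 h1]] := ut t (ltW ht).
  have t0 : 0 < t := lt_trans ltr01 t1.
  have hW := hW1 t (ltW ht).
  have [_ /andP[hs0 hs1]] := ut s0 (lexx _).
  set P := t `^ b in hW *; set u := w t - 1 in hW *; set us0 := w s0 - 1 in hW hs0 hs1.
  have P0' : 0 <= P by apply: powR_ge0.
  have PP0 : P0 <= P.
    by apply: ge0_ler_powR; rewrite ?nnegrE ?ltW //; apply: ltW.
  have h := ler_wpM2l P0' (dwb t (ltW ht)).
  have h' : (P + P0) * (P * derive1 w t + u * (b * (P / t))) <=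
      (P + P0) * (P * ((- (alpha * K) * u + C' * u ^+ 2) / (K * t)) + u * (b * (P / t))).
    by apply: ler_wpM2l; [lra | rewrite lerD2r].
  apply: (le_trans (y := P * u * (b * (P / t)) + (P + P0) *
      (P * ((- (alpha * K) * u + C' * u ^+ 2) / (K * t)) + u * (b * (P / t)))));
    first by rewrite lerD2l.
  have -> : P * u * (b * (P / t)) + (P + P0) *
      (P * ((- (alpha * K) * u + C' * u ^+ 2) / (K * t)) + u * (b * (P / t)))
      = (P / t) * (u * ((C' * u * (P + P0) - alpha * K / 2 * P0) / K)).
    by rewrite /b; field; rewrite ?gt_eqF.
  apply: mulr_ge0_le0; first by apply: divr_ge0 => //; apply: ltW.
  apply: mulr_ge0_le0 => //.
  rewrite pmulr_lle0 ?invr_gt0 //.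
  have h1' : u * P0 <= u * P by apply: ler_wpM2l.
  have h4 : u * (P + P0) <= 2 * (us0 * P0) by lra.
  have h5 : C' * (u * (P + P0)) <= C' * (2 * (us0 * P0)) by apply: ler_wpM2l => //; apply: ltW.
  have h6 : C' * us0 <= alpha * K / 4.
    apply: le_trans hcu1; by rewrite ler_pM2l.
  have h7 : C' * us0 * P0 <= alpha * K / 4 * P0 by apply: ler_wpM2r => //; apply: ltW.
  lra.
exists (V s0).
exists s0; split; first exact: num_real.
move=> t ht; have [t1 /andP[h0 h1]] := ut t (ltW ht).
have t0 : 0 < t := lt_trans ltr01 t1.
have hV := @nincr_of_derive R V _ s0 HV HV0 s0 t (lexx _) (ltW ht).
rewrite ger0_norm //.
have eA : alpha = b + b by rewrite /b; field.
rewrite powRN.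
have -> : t `^ alpha = t `^ b * t `^ b.
  by rewrite [in LHS]eA powRD // (gt_eqF t0) implybT.
have PP : 0 < t `^ b * t `^ b by rewrite mulr_gt0 // powR_gt0.
rewrite ler_pdivlMr //.
apply: (le_trans _ hV).
rewrite /V /W /=.
have : 0 <= t `^ b * (w t - 1) * P0.
  by apply: mulr_ge0; [apply: mulr_ge0 => //; apply: powR_ge0 | apply: ltW].
set P := t `^ b; set u := w t - 1.
have -> : ((@powR R)^~ b * (w - cst 1) * ((@powR R)^~ b + cst P0)) t = P * u * (P + P0) by [].
have -> : P * u * (P + P0) = u * (P * P) + P * u * P0 by ring.
lra.
Qed.

Lemma ODE_main : (w s @[s --> +oo] --> (1 : R)) /\
  exists C0 : R, \forall s \near +oo, `|w s - 1| <= C0 * s `^ (- alpha).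
Proof. split; [exact: wlim | exact: wrate]. Qed.

End ODE.

Unset Implicit Arguments. Set Strict Implicit. Set Printing Implicit Defensive.

Theorem lemma2p4 (R : realType) (n : nat)
  (Gamma : set 'rV[R]_n.+1) (f : 'rV[R]_n.+1 -> R)
  (a : 'rV[R]_n.+1) (g : R -> R) (c2 delta : R) (w : R -> R) :
  (* Gamma: proper open convex cone, Gamma_n subset Gamma subset Gamma_1 *)
  open_convex_cone Gamma ->
  Gamma <> [set: 'rV[R]_n.+1] ->
  [set x : 'rV[R]_n.+1 | forall i, 0 < x ord0 i] `<=` Gamma ->
  Gamma `<=` [set x : 'rV[R]_n.+1 | 0 < \sum_i x ord0 i] ->
  (* f smooth, symmetric, strictly increasing in each variable *)
  smooth_on Gamma f ->
  symmetric_on Gamma f ->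
  (forall x i, Gamma x -> 0 < partial i f x) ->
  (exists2 astar : R, 0 < astar & f (const_mx astar) = 1) ->
  (forall x0, bdry Gamma x0 -> limsup_lt1 Gamma f x0) ->
  (* A = diag(a) in \mathcal A, 0 < a_1 <= ... <= a_n, f_1 = max_i f_i *)
  in_Acal f a ->
  0 < a ord0 ord0 ->
  (forall i j : 'I_n.+1, (i <= j)%N -> a ord0 i <= a ord0 j) ->
  partial ord0 f a = fhat f a ->
  (* g *)
  (forall x, 1 <= x -> Gamma (gvec a g x) /\ f (gvec a g x) = 1) ->
  {within `[1, +oo[, continuous g} ->
  (forall k x, 1 < x -> derivable (iter k (fun h : R -> R => derive1 h) g) x 1) ->
  (* parameters *)
  1 < c2 -> 0 <= delta ->
  let alpha := grad_dot f a / ((2 * a ord0 ord_max + delta) * partial ord0 f a) in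
  1 < alpha ->
  (* w solves the ODE on [1, +oo) *)
  (forall s, 1 <= s -> 1 <= w s) ->
  {within `[1, +oo[, continuous w} ->
  (forall s, 1 < s -> derivable w s 1 /\
     derive1 w s = (g (w s) - a ord0 ord0 * w s) / ((2 * a ord0 ord_max + delta) * s)) ->
  w 1 = c2 ->
  (w s @[s --> +oo%R] --> (1 : R)) /\
  (exists C : R, \forall s \near +oo%R, `|w s - 1| <= C * s `^ (- alpha)).
Proof.
move=> HG HGne Hpos Hsum Hsm Hsym Hpart Hastar Hbd [Ha [Hfa Hgd]] a0 Hmono Hmax
  Hg gc gd c21 d0 alpha a1 w1 wc wd wc2.
set K := 2 * a ord0 ord_max + delta.
have K0 : 0 < K by rewrite /K; have := Ha ord_max; lra.
have Ga : Gamma a by apply: Hpos.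
set f1 := partial ord0 f a.
have f1p : 0 < f1 by apply: Hpart.
have alpha0 : 0 < alpha by lra.
have NEGh := NEG HG Hpos Hsm Hpart Ha Hfa Hg.
have KEYh := KEY HG Hpos Hsm Hpart Ha Hfa Hg.
have KEY2 : exists2 u0 : R, 0 < u0 & exists C : R, forall x, 1 <= x <= 1 + u0 ->
    g x - a ord0 ord0 * x <= - (alpha * K) * (x - 1) + C * (x - 1) ^+ 2.
  case: KEYh => u0 u00 [C HC]; exists u0 => //; exists C => x hx.
  have := HC x hx.
  set S := \sum_(i < n) _.
  have eaK : alpha * K = a ord0 ord0 + S / f1.
    rewrite /alpha /grad_dot big_ord_recl -/S -/f1 -/K.
    by field; rewrite ?gt_eqF.
  rewrite eaK; lra.
have := @ODE_main R g w (a ord0 ord0) K alpha K0 alpha0 (ltW a0) NEGh KEY2 gc w1 wd.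
by [].
Qed.
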